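(* Let $G$ be a connected graph with $n$ vertices and let $k$ be an integer. The following statements are equivalent: (1) there is a GS ordering of $G$ whose $\mathcal{F}$-tree has at least $k$ leaves; (2) there is a spanning tree of $G$ with at least $k$ leaves; (3) there is a connected dominating set of $G$ with at most $n-k$ vertices.
   Context: All graphs are finite, simple, undirected, connected and non-empty. A GS ordering of $G$ is an ordering $(v_1,\dots,v_n)$ of $V(G)$ such that every $v_i$ with $i>1$ has a neighbor among $v_1,\dots,v_{i-1}$. Its $\mathcal{F}$-tree is the spanning tree rooted at $v_1$ in which the parent of $v_i$ ($i>1$) is its leftmost neighbor in the ordering. Spanning trees are rooted; a leaf is a non-root vertex without children (the root is never a leaf). A connected dominating set is a set $D\subseteq V(G)$ with $G[D]$ connected and every vertex outside $D$ adjacent to a vertex of $D$. *)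

(* Defs.v *)
From mathcomp Require Import all_boot all_order all_algebra.
Set Implicit Arguments. Unset Strict Implicit. Unset Printing Implicit Defensive.

Definition simple_graph (T : finType) (e : rel T) : Prop :=
  symmetric e /\ irreflexive e.

Definition connected_graph (T : finType) (e : rel T) : Prop :=
  0 < #|T| /\ forall x y : T, connect e x y.

Definition GS_ordering (T : finType) (e : rel T) (v1 : T) (rest : seq T) : Prop :=
  let s := v1 :: rest in
  [/\ uniq s, (forall x : T, x \in s) &
      forall i, 0 < i < size s -> has (e (nth v1 s i)) (take i s)].

Definition Ftree_parent (T : finType) (e : rel T) (v1 : T) (rest : seq T) (v : T) : T :=
  if v == v1 then v1 else nth v1 (v1 :: rest) (find (e v) (v1 :: rest)).

(* A rooted spanning tree of G, given by its root r and parent function p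
   (p r = r, each non-root vertex is adjacent to its parent, and iterating
   the parent map from any vertex reaches the root, i.e. no cycles). *)
Definition rooted_spanning_tree (T : finType) (e : rel T) (r : T) (p : T -> T) : Prop :=
  [/\ p r = r, (forall v, v != r -> e v (p v)) & (forall v, exists m, iter m p v = r)].

Definition leaves (T : finType) (r : T) (p : T -> T) : {set T} :=
  [set v | (v != r) && [forall u, (u != r) ==> (p u != v)]].

Definition connected_dominating (T : finType) (e : rel T) (D : {set T}) : Prop :=
  [/\ D != set0,
      (forall x y, x \in D -> y \in D ->
         connect [rel a b | [&& a \in D, b \in D & e a b]] x y) &
      (forall v, v \notin D -> exists2 u, u \in D & e v u)].

(* Main.v *)
Require Import Defs.
From mathcomp Require Import all_boot all_order all_algebra zify.
Set Implicit Arguments. Unset Strict Implicit.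

Lemma ftree_key (T : finType) (e : rel T) v1 rest v :
  GS_ordering e v1 rest -> v != v1 ->
  e v (Ftree_parent e v1 rest v) /\
  index (Ftree_parent e v1 rest v) (v1 :: rest) < index v (v1 :: rest).
Proof.
case=> U A H nv; rewrite /Ftree_parent (negbTE nv).
set s := v1 :: rest.
have vs : v \in s by apply: A.
have i0 : 0 < index v s.
  by rewrite /s /= eq_sym (negbTE nv).
have iS : index v s < size s by rewrite index_mem.
have := H (index v s); rewrite i0 iS nth_index // => /(_ isT) ht.
have hs : has (e v) s.
  by rewrite -(cat_take_drop (index v s) s) has_cat ht.
split; first exact: nth_find.
rewrite index_uniq //; last by rewrite -has_find.
by rewrite -has_take.
Qed.

Lemma ftree_ok (T : finType) (e : rel T) v1 rest :
  GS_ordering e v1 rest -> rooted_spanning_tree e v1 (Ftree_parent e v1 rest).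
Proof.
move=> G; split.
- by rewrite /Ftree_parent eqxx.
- by move=> v nv; case: (ftree_key G nv).
move=> v.
move: {2}(index v (v1 :: rest)) (leqnn (index v (v1 :: rest))) => n.
elim: n v => [|n IH] v hv.
  exists 0; move: hv; rewrite leqn0 /=.
  by case: (v1 =P v) => [-> _|].
case: (eqVneq v v1) => [->|nv]; first by exists 0.
have [_ lt] := ftree_key G nv.
have [m hm] := IH (Ftree_parent e v1 rest v) (leq_trans lt hv).
by exists m.+1; rewrite iterSr.
Qed.

Lemma parent_notleaf (T : finType) r (p : T -> T) u :
  u != r -> p u \notin leaves r p.
Proof.
move=> nu; rewrite inE negb_and negbK; apply/orP; right.
apply/forallP => /(_ u); by rewrite nu eqxx.
Qed.

Lemma tree_cds (T : finType) (e : rel T) r p :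
  symmetric e -> rooted_spanning_tree e r p ->
  connected_dominating e (~: leaves r p).
Proof.
move=> sym [pr ep it].
set D := ~: leaves r p.
have rD : r \in D by rewrite inE inE eqxx.
have pD u : u != r -> p u \in D by move=> nu; rewrite inE parent_notleaf.
set R := [rel a b | [&& a \in D, b \in D & e a b]].
have symR : symmetric R.
  by move=> a b /=; rewrite sym andbCA.
have toR x : x \in D -> connect R x r.
  have [m hm] := it x.
  elim: m x hm => [|m IH] x hm xD; first by rewrite -hm connect0.
  case: (eqVneq x r) => [->|nx]; first exact: connect0.
  apply: connect_trans (IH (p x) _ (pD _ nx)); last by rewrite -iterSr.
  by apply: connect1; rewrite /= xD pD // ep.
split.
- by apply/set0Pn; exists r.
- move=> x y xD yD; apply: connect_trans (toR _ xD) _.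
  by rewrite (sym_connect_sym symR); apply: toR.
- move=> v; rewrite inE negbK => vL.
  have nv : v != r by move: vL; rewrite inE => /andP[].
  by exists (p v); [apply: pD | apply: ep].
Qed.

Definition gsv (T : finType) (e : rel T) (v1 : T) (s : seq T) :=
  forall i, 0 < i < size (v1 :: s) -> has (e (nth v1 (v1 :: s) i)) (take i (v1 :: s)).

Lemma gs_ext (T : finType) (e : rel T) v1 s x :
  gsv e v1 s -> has (e x) (v1 :: s) -> gsv e v1 (rcons s x).
Proof.
move=> H hx i; rewrite -rcons_cons size_rcons ltnS nth_rcons => /andP[i0].
rewrite leq_eqVlt => /orP[/eqP->|lti].
  by rewrite ltnn eqxx -cats1 take_size_cat.
rewrite lti -cats1 takel_cat; last exact: ltnW.
by apply: H; rewrite i0.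
Qed.

Lemma cross (T : finType) (e : rel T) (D : {set T}) (s : seq T) r :
  symmetric e ->
  (forall x y, x \in D -> y \in D ->
         connect [rel a b | [&& a \in D, b \in D & e a b]] x y) ->
  r \in s -> {subset s <= D} -> forall z, z \in D -> z \notin s ->
  exists x, [/\ x \in D, x \notin s & has (e x) s].
Proof.
move=> sym conn rs sD z zD zs.
case: (boolP [exists x, [&& x \in D, x \notin s & has (e x) s]]).
  by case/existsP => x /and3P[] *; exists x.
move=> /existsPn H.
have cl : closed [rel a b | [&& a \in D, b \in D & e a b]] (mem s).
  move=> a b /= /and3P[aD bD eab].
  case as_: (a \in s); case bs: (b \in s) => //.
    have := H b; rewrite bD bs /= => /negP; case.
    by apply/hasP; exists a => //; rewrite sym.
  have := H a; rewrite aD as_ /= => /negP; case.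
  by apply/hasP; exists b.
have := closed_connect cl (conn r z (sD r rs) zD).
move=> h; by move: zs; rewrite -h rs.
Qed.

Lemma grow (T : finType) (e : rel T) (D : {set T}) r :
  symmetric e -> r \in D ->
  (forall x y, x \in D -> y \in D ->
         connect [rel a b | [&& a \in D, b \in D & e a b]] x y) ->
  forall m, exists s, [/\ uniq (r :: s), gsv e r s, {subset r :: s <= D} &
                         (m <= size s \/ {subset D <= r :: s})].
Proof.
move=> sym rD conn; elim=> [|m [s [U G S C]]].
  exists [::]; split => //.
  - by move=> i /andP[i0 i1]; move: i1 i0; case: i.
  - by move=> x; rewrite inE => /eqP->.
  - by left.
case: (boolP [forall x, (x \in D) ==> (x \in r :: s)]) => [/forallP al|].
  exists s; split => //; right => x xD; exact: (implyP (al x)).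
case/forallPn => z; rewrite negb_imply => /andP[zD zs].
have [x [xD xs hx]] := cross sym conn (mem_head r s) S zD zs.
exists (rcons s x); split.
- by rewrite -rcons_cons rcons_uniq xs U.
- exact: gs_ext.
- by move=> y; rewrite -rcons_cons mem_rcons inE => /orP[/eqP->|/S].
- case: C => [le|sub]; last by right => y /sub; rewrite -rcons_cons mem_rcons inE orbC => ->.
  by left; rewrite size_rcons ltnS.
Qed.
Lemma cds_gs (T : finType) (e : rel T) (D : {set T}) :
  symmetric e -> connected_dominating e D ->
  exists v1 rest, GS_ordering e v1 rest /\
     ~: D \subset leaves v1 (Ftree_parent e v1 rest).
Proof.
move=> sym [/set0Pn [r rD] conn dom].
have [s [U G S C]] := grow sym rD conn #|T|.
have C' : {subset D <= r :: s}.
  case: C => // le; exfalso.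
  have := max_card (mem (r :: s)).
  by rewrite (card_uniqP U) /= ltnNge le.
set s2 := enum (~: D).
have nbD u : u != r -> has (e u) (r :: s).
  move=> nu; case: (boolP (u \in D)) => uD.
    have /connectP [[|y p] pth lst] := conn u r uD rD.
      by move: nu; rewrite lst /= eqxx.
    have /andP [/and3P [_ yD euy] _] := pth.
    by apply/hasP; exists y => //; apply: C'.
  have [y yD euy] := dom u uD.
  by apply/hasP; exists y => //; apply: C'.
have Us2 : uniq s2 by apply: enum_uniq.
have s2D y : y \in s2 -> y \notin D by rewrite mem_enum inE.
exists r, (s ++ s2); split.
  split.
  - rewrite -cat_cons cat_uniq U Us2 andbT; apply/hasPn => y /s2D yD.
    by apply/negP => /S; apply/negP.
  - move=> x; rewrite -cat_cons mem_cat; case: (boolP (x \in D)) => xD.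
      by rewrite C'.
    by rewrite orbC mem_enum inE xD.
  - move=> i; rewrite -cat_cons size_cat => /andP [i0 iS].
    rewrite nth_cat take_cat.
    case: ltnP => lti.
      by apply: G; rewrite i0 lti.
    have : nth r s2 (i - size (r :: s)) \in s2 by rewrite mem_nth // ltn_subLR // addnC.
    move/s2D => nD.
    have nr : nth r s2 (i - size (r :: s)) != r.
      by apply/eqP => h; move: nD; rewrite h rD.
    by rewrite has_cat nbD.
apply/subsetP => v; rewrite inE => vD.
rewrite inE; apply/andP; split.
  by apply/eqP => h; move: vD; rewrite h rD.
apply/forallP => u; apply/implyP => nu.
rewrite /Ftree_parent (negbTE nu) -cat_cons find_cat nbD // nth_cat.
rewrite -has_find nbD //.
apply/eqP => h; move: vD; rewrite -h.
by rewrite S // mem_nth // -has_find nbD.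
Qed.

Unset Implicit Arguments. Set Strict Implicit.
Import Order.TTheory GRing.Theory Num.Theory.
Local Open Scope ring_scope.

Theorem corollary3p6 (T : finType) (e : rel T) (k : int) :
  simple_graph e -> connected_graph e ->
  ((exists (v1 : T) (rest : seq T),
      GS_ordering e v1 rest /\ k <= (#|leaves v1 (Ftree_parent e v1 rest)|)%:Z)
   <-> (exists (r : T) (p : T -> T),
      rooted_spanning_tree e r p /\ k <= (#|leaves r p|)%:Z))
  /\
  ((exists (r : T) (p : T -> T),
      rooted_spanning_tree e r p /\ k <= (#|leaves r p|)%:Z)
   <-> (exists D : {set T},
      connected_dominating e D /\ (#|D|)%:Z <= (#|T|)%:Z - k)).
Proof.
move=> [sym _] _.
have h12 : (exists (v1 : T) (rest : seq T),
      GS_ordering e v1 rest /\ k <= (#|leaves v1 (Ftree_parent e v1 rest)|)%:Z)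
   -> (exists (r : T) (p : T -> T),
      rooted_spanning_tree e r p /\ k <= (#|leaves r p|)%:Z).
  move=> [v1 [rest [G hk]]]; exists v1, (Ftree_parent e v1 rest).
  by split => //; apply: ftree_ok.
have h23 : (exists (r : T) (p : T -> T),
      rooted_spanning_tree e r p /\ k <= (#|leaves r p|)%:Z)
   -> (exists D : {set T},
      connected_dominating e D /\ (#|D|)%:Z <= (#|T|)%:Z - k).
  move=> [r [p [tr hk]]]; exists (~: leaves r p); split; first exact: tree_cds.
  have := cardsC (leaves r p); lia.
have h31 : (exists D : {set T},
      connected_dominating e D /\ (#|D|)%:Z <= (#|T|)%:Z - k) ->
      (exists (v1 : T) (rest : seq T),
      GS_ordering e v1 rest /\ k <= (#|leaves v1 (Ftree_parent e v1 rest)|)%:Z).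
  move=> [D [cd hD]]; have [v1 [rest [G sub]]] := cds_gs sym cd.
  exists v1, rest; split => //.
  have := subset_leq_card sub; have := cardsC D; lia.
split; split => H.
- exact: h12.
- exact: h31 (h23 H).
- exact: h23.
- exact: h12 (h31 H).
Qed.
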